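(* Let $G=(X\cup Y,E)$ be a connected convex bipartite graph with a lex-convex ordering $\sigma=(x_1,\ldots,x_{n_1},y_1,\ldots,y_{n_2})$, and let $(H_1,J_1,H_2,J_2,\ldots)$ be the chain decomposition of $G$ with respect to $\sigma$. Let $y_{r'}=right(x_1)$, $x_r=right(y_1)$, $y_s=right(x_r)$, and assume $s<n_2$; let $x_l=left(y_{s+1})$ and $x_p=right(y_{s+1})$. Then at least one of the following holds: (a) there exists a minimum vertex-edge dominating set $D$ of $G$ with $x_r\in D$; (b) there exists a minimum vertex-edge dominating set $D$ of $G$ with $y_\alpha\in D$, where $\alpha=\max\{i : 1\le i\le r' \text{ and } y_i \text{ is adjacent to every vertex of } J_1\}$ (in particular this set of indices is nonempty, and $y_\alpha\in N_G(x_1)$).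
   Context: All graphs are finite, simple and undirected. $N_G(v)$ is the open neighbourhood and $N_G[v]=N_G(v)\cup\{v\}$. An edge $uv$ is ve-dominated by a vertex $w$ if $w\in N_G[u]\cup N_G[v]$. A vertex-edge dominating set (VED-set) of $G$ is a set $D\subseteq V(G)$ such that every edge $uv$ satisfies $|(N_G[u]\cup N_G[v])\cap D|\ge 1$; $\gamma_{ve}(G)$ is the minimum size of a VED-set, and a minimum VED-set is one of that size. A bipartite graph $G=(X\cup Y,E)$ is convex (with respect to $Y$) if $Y$ can be ordered $y_1,\dots,y_{n_2}$ so that for every $x\in X$, $N_G(x)$ is a set of consecutive vertices in this order. Given an ordering $\sigma=(x_1,\dots,x_{n_1},y_1,\dots,y_{n_2})$, for a vertex $v$, $left(v)$ and $right(v)$ denote the neighbours of $v$ of minimum and maximum index in $\sigma$ respectively; for $x_i,x_j$, $left(x_i)\prec left(x_j)$ (resp. $\preceq$) means the index of $left(x_i)$ is less than (resp. at most) that of $left(x_j)$, and similarly for $right$. $\sigma$ is lex-convex if the order on $Y$ is a convex ordering and for all $i<j$ either $left(x_i)\prec left(x_j)$, or $left(x_i)=left(x_j)$ and $right(x_i)\preceq right(x_j)$. A bipartite graph is a chain graph if the neighbourhoods on each side are totally ordered by inclusion. The chain decomposition of a connected convex bipartite graph $G$ with lex-convex ordering $\sigma$: let $x_{t_1}=right(y_1)$ and let $H_1$ be the (chain) subgraph induced by $N(y_1)\cup N(x_{t_1})$; remove $H_1$ from $G$; let $J_1$ be the set of vertices of $X$ that are isolated in $G-V(H_1)$; remove $J_1$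 as well; repeat on the remaining graph (with the inherited ordering) to obtain $H_2,J_2,\dots$, until what remains is a chain graph or a set of isolated vertices. Isolated vertices are not considered part of any $H_i$. Notation: $X_i=\{x_i,\dots,x_{n_1}\}$, $Y_i=\{y_i,\dots,y_{n_2}\}$. *)

(* Defs.v *)
From mathcomp Require Import all_boot all_order.
Set Implicit Arguments. Unset Strict Implicit. Unset Printing Implicit Defensive.

(* A bipartite graph with sides X = 'I_n1.+1 (x_1,...,x_{n1+1}, 0-based) and
   Y = 'I_n2.+1 (y_1,...,y_{n2+1}, 0-based); the given orders on X and Y are
   the orders of the ordinals, i.e. sigma = (x_1..x_{|X|}, y_1..y_{|Y|}).
   adj x y <-> xy is an edge. *)

Section Bip.
Variables (n1 n2 : nat) (adj : 'I_n1.+1 -> 'I_n2.+1 -> bool).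

Definition vert := ('I_n1.+1 + 'I_n2.+1)%type.

Definition grel : rel vert := fun u v =>
  match u, v with
  | inl x, inr y => adj x y
  | inr y, inl x => adj x y
  | _, _ => false
  end.

Definition connected_bip : Prop := forall u v : vert, connect grel u v.

Definition cnbhd (v : vert) : {set vert} := [set w | (w == v) || grel v w].

Definition is_ved (D : {set vert}) : Prop :=
  forall u v : vert, grel u v -> exists2 w, w \in D & w \in cnbhd u :|: cnbhd v.

Definition is_min_ved (D : {set vert}) : Prop :=
  is_ved D /\ forall D' : {set vert}, is_ved D' -> #|D| <= #|D'|.

Definition convex_Y : Prop :=
  forall (x : 'I_n1.+1) (y1 y2 y : 'I_n2.+1),
    adj x y1 -> adj x y2 -> y1 <= y <= y2 -> adj x y.

(* left/right of vertices (as 0-based indices; meaningful when the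
   neighbourhood is nonempty, which holds in a connected graph) *)
Definition leftX (x : 'I_n1.+1) : nat := \big[minn/n2]_(y | adj x y) (y : nat).
Definition rightX (x : 'I_n1.+1) : nat := \max_(y | adj x y) (y : nat).
Definition rightY (y : 'I_n2.+1) : nat := \max_(x | adj x y) (x : nat).

Definition lex_convex : Prop :=
  convex_Y /\
  forall i j : 'I_n1.+1, i < j ->
    leftX i < leftX j \/ (leftX i = leftX j /\ rightX i <= rightX j).

(* first step of the chain decomposition:
   x_{t_1} = right(y_1);  V(H_1) = N(y_1) u N(x_{t_1});
   J_1 = vertices of X isolated in G - V(H_1),
       = { x in X \ N(y_1) | N(x) subset N(x_{t_1}) }. *)
Definition xt1 : 'I_n1.+1 := inord (rightY ord0).

Definition J1 : {set 'I_n1.+1} :=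
  [set x | ~~ adj x ord0 & [forall y, adj x y ==> adj xt1 y]].

End Bip.

(* Main.v *)
Require Import Defs.
From mathcomp Require Import all_boot all_order.
Set Implicit Arguments. Unset Strict Implicit. Unset Printing Implicit Defensive.

Section S.
Variables (n1 n2 : nat) (adj : 'I_n1.+1 -> 'I_n2.+1 -> bool).
Hypothesis conn : connected_bip adj.
Hypothesis lex : lex_convex adj.

Lemma nbr_of (u t : vert n1 n2) : u != t -> exists v, Defs.grel adj u v.
Proof.
move=> ut; have := conn u t; case/connectP => p; case: p => [_ /= tu|v p /=].
  by rewrite tu eqxx in ut.
by case/andP => h _ _; exists v.
Qed.

Lemma nbrX x : exists y, adj x y.
Proof.
have [[v|v] h] := @nbr_of (inl x) (inr ord0) isT; first by [].
by exists v.
Qed.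

Lemma nbrY y : exists x, adj x y.
Proof.
have [[v|v] h] := @nbr_of (inr y) (inl ord0) isT; last by [].
by exists v.
Qed.

Lemma cvx x (y1 y2 y : 'I_n2.+1) : adj x y1 -> adj x y2 -> y1 <= y <= y2 -> adj x y.
Proof. by case: lex => c _; apply: c. Qed.

Lemma rX_ge x y : adj x y -> y <= rightX adj x.
Proof. by move=> h; apply: (leq_bigmax_cond (F := fun y : 'I_n2.+1 => (y : nat))). Qed.

Lemma rX_att x : exists2 y, adj x y & val y = rightX adj x.
Proof.
have [y0 h0] := nbrX x.
case: (arg_maxnP (fun y : 'I_n2.+1 => (y : nat)) h0) => y Py Hm.
exists y => //; apply/eqP; rewrite eqn_leq rX_ge //=.
by apply/bigmax_leqP => i /Hm.
Qed.

Lemma rY_ge x y : adj x y -> x <= rightY adj y.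
Proof. by move=> h; apply: (leq_bigmax_cond (F := fun x : 'I_n1.+1 => (x : nat))). Qed.

Lemma rY_att y : exists2 x, adj x y & val x = rightY adj y.
Proof.
have [x0 h0] := nbrY y.
case: (@arg_maxnP _ x0 (fun x => adj x y) (fun x : 'I_n1.+1 => (x : nat)) h0) => x Px Hm.
exists x => //; apply/eqP; rewrite eqn_leq rY_ge //=.
by apply/bigmax_leqP => i /Hm.
Qed.

Lemma bigmin_le (r : seq 'I_n2.+1) (P : pred 'I_n2.+1) y :
  y \in r -> P y -> \big[minn/n2]_(i <- r | P i) (i : nat) <= y.
Proof.
elim: r => // a r IH; rewrite inE big_cons => /orP [/eqP<- -> | yr Py].
  by rewrite geq_minl.
by case: (P a); [rewrite geq_min IH ?orbT | apply: IH].
Qed.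

Lemma lX_le x y : adj x y -> leftX adj x <= y.
Proof. by move=> h; apply: bigmin_le => //; apply: mem_index_enum. Qed.

Lemma lX_att x : exists2 y, adj x y & val y = leftX adj x.
Proof.
have [y1 h1] := nbrX x.
have : (leftX adj x == n2) || [exists y, adj x y && (val y == leftX adj x)].
  rewrite /leftX; apply: (big_ind (fun v => (v == n2) || [exists y, adj x y && (val y == v)])).
  - by rewrite eqxx.
  - by move=> a b Ha Hb; rewrite /minn; case: ifP.
  - by move=> i hi; apply/orP; right; apply/existsP; exists i; rewrite hi eqxx.
case/orP => [/eqP e | /existsP [y /andP [h /eqP e]]]; last by exists y.
exists y1 => //; apply/eqP; rewrite eqn_leq lX_le // andbT e -ltnS; exact: ltn_ord.
Qed.


Lemma adj00 : adj ord0 ord0.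
Proof.
have [x hx] := nbrY ord0.
have lx0 : leftX adj x = 0 by apply/eqP; rewrite -leqn0 (lX_le hx).
have e : leftX adj ord0 = 0.
  case: (boolP (0 < x)) => [xpos|x0]; last first.
    by have <- : x = ord0 by apply: val_inj; apply/eqP; rewrite /= -leqn0 leqNgt.
  by case: lex => _ /(_ ord0 x xpos) [|[-> _]] //; rewrite lx0 ltn0.
have [y hy ey] := lX_att ord0.
by have -> : (ord0 : 'I_n2.+1) = y by apply: val_inj; rewrite /= ey e.
Qed.

Lemma left0_le x x' : adj x ord0 -> adj x' ord0 -> x <= x' -> rightX adj x <= rightX adj x'.
Proof.
move=> h h'; rewrite leq_eqVlt => /orP [/eqP e | lt].
  by have -> : x = x' by apply: val_inj.
case: lex => _ /(_ x x' lt) [|[_ //]].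
by have := lX_le h'; rewrite leqn0 => /eqP ->; rewrite ltn0.
Qed.

Lemma xt1_val : val (xt1 adj) = rightY adj ord0.
Proof.
have [x hx ex] := rY_att ord0.
by rewrite /xt1 /= inordK // -ex ltn_ord.
Qed.

Lemma xr_adj0 : adj (xt1 adj) ord0.
Proof.
have [x hx ex] := rY_att ord0.
by have -> : xt1 adj = x by apply: val_inj; rewrite xt1_val ex.
Qed.

Lemma adj_xr y : adj (xt1 adj) y = (y <= rightX adj (xt1 adj)).
Proof.
apply/idP/idP; first exact: rX_ge.
move=> hy; have [y' hy' ey'] := rX_att (xt1 adj).
by apply: (cvx xr_adj0 hy'); rewrite leq0n /= ey'.
Qed.

Lemma sub_xr x y : adj x ord0 -> adj x y -> adj (xt1 adj) y.
Proof.
move=> h0 hy; rewrite adj_xr; apply: leq_trans (rX_ge hy) _.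
apply: left0_le => //; first exact: xr_adj0.
by rewrite xt1_val; apply: rY_ge.
Qed.

Lemma eqLL (x x' : 'I_n1.+1) : (inl x' == inl x :> vert n1 n2) = (x' == x).
Proof. by apply/eqP/eqP => [[]|->]. Qed.
Lemma eqRR (x x' : 'I_n2.+1) : (inr x' == inr x :> vert n1 n2) = (x' == x).
Proof. by apply/eqP/eqP => [[]|->]. Qed.

Lemma domL x' x y : (inl x' \in cnbhd adj (inl x) :|: cnbhd adj (inr y)) = (x' == x) || adj x' y.
Proof. by rewrite !inE /= eqLL orbF. Qed.

Lemma domR y' x y : (inr y' \in cnbhd adj (inl x) :|: cnbhd adj (inr y)) = adj x y' || (y' == y).
Proof. by rewrite !inE /= eqRR orbF. Qed.

Lemma edgeP u v : Defs.grel adj u v -> exists x y, adj x y /\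
   cnbhd adj u :|: cnbhd adj v = cnbhd adj (inl x) :|: cnbhd adj (inr y).
Proof.
case: u => [x|y]; case: v => [x'|y'] //= h.
  by exists x, y'.
by exists x', y; split => //; rewrite setUC.
Qed.

Lemma exch D (A B : {set vert n1 n2}) : is_ved adj D ->
  (forall x y w, adj x y -> w \in A -> w \in cnbhd adj (inl x) :|: cnbhd adj (inr y) ->
     exists2 w', w' \in B & w' \in cnbhd adj (inl x) :|: cnbhd adj (inr y)) ->
  is_ved adj ((D :\: A) :|: B).
Proof.
move=> hD hAB u v huv; have [w wD wd] := hD u v huv.
have [x [y [hxy e]]] := edgeP huv; rewrite e in wd *.
case: (boolP (w \in A)) => wA.
  by have [w' w'B w'd] := hAB x y w hxy wA wd; exists w' => //; rewrite inE w'B orbT.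
by exists w => //; rewrite !inE wA wD.
Qed.

Lemma card_exch (T : finType) (D A B : {set T}) : A \subset D -> #|B| <= #|A| ->
  #|(D :\: A) :|: B| <= #|D|.
Proof.
move=> sAD hBA; rewrite -(cardsID A D) (setIidPr sAD).
apply: leq_trans (leq_card_setU _ _) _.
by rewrite addnC leq_add2r.
Qed.

Definition vedb (D : {set vert n1 n2}) := [forall u, forall v, Defs.grel adj u v ==>
  [exists w, (w \in D) && (w \in cnbhd adj u :|: cnbhd adj v)]].

Lemma vedP D : reflect (is_ved adj D) (vedb D).
Proof.
apply: (iffP forallP) => [h u v huv | h u].
  have /forallP/(_ v)/implyP/(_ huv)/existsP[w /andP[]] := h u.
  by exists w.
apply/forallP => v; apply/implyP => huv; have [w ? ?] := h u v huv.
by apply/existsP; exists w; apply/andP.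
Qed.

Lemma min_exists : exists D, is_min_ved adj D.
Proof.
have hT : vedb setT.
  by apply/vedP => u v _; exists u; [rewrite in_setT | rewrite !inE eqxx].
case: (@arg_minnP _ setT vedb (fun D => #|D|) hT) => D /vedP hD hm.
by exists D; split => // D' /vedP /hm.
Qed.

Lemma min_of D D' : is_min_ved adj D -> is_ved adj D' -> #|D'| <= #|D| -> is_min_ved adj D'.
Proof. by case=> _ hm hD' le; split => // D'' /hm; apply: leq_trans. Qed.


Local Notation xr := (xt1 adj).
Local Notation s := (rightX adj (xt1 adj)).

Lemma xr_lt a b : adj xr a -> ~~ adj xr b -> a < b.
Proof.
move=> ha; rewrite ltnNge; apply: contra => ba.
by rewrite adj_xr (leq_trans ba) // -adj_xr.
Qed.

Definition near (z : vert n1 n2) := match z with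
  | inl c => [exists y, adj c y && adj xr y]
  | inr k => adj xr k end.

Lemma main : rightX adj xr < n2 ->
  (exists D, is_min_ved adj D /\ inl xr \in D)
  \/
  (exists alpha : 'I_n2.+1,
      [/\ alpha <= rightX adj ord0,
          [forall x in J1 adj, adj x alpha],
          (forall i : 'I_n2.+1,
              i <= rightX adj ord0 -> [forall x in J1 adj, adj x i] -> i <= alpha),
          adj ord0 alpha
        & exists D, is_min_ved adj D /\ inr alpha \in D]).
Proof.
move=> _.
have [D Dmin] := min_exists.
have hD := Dmin.1.
have [w wD wd] := hD (inl ord0) (inr ord0) adj00.
case: w wD wd => [x' | j] wD wd.
  rewrite domL in wd.
  have hx' : adj x' ord0 by case/orP: wd => [/eqP -> |]; [exact: adj00 | done].
  left; exists ((D :\: [set inl x']) :|: [set inl xr]); split; last first.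
    by rewrite !inE eqxx orbT.
  apply: (min_of Dmin).
    apply: exch hD _ => x y w hxy; rewrite inE => /eqP -> ; rewrite domL => hd.
    exists (inl xr); first by rewrite inE.
    rewrite domL; apply/orP; right; apply: (sub_xr hx').
    by case/orP: hd => [/eqP ->|].
  by apply: card_exch; [rewrite sub1set | rewrite !cards1].
rewrite domR in wd.
have hj : adj ord0 j by case/orP: wd => // /eqP ->; exact: adj00.
have xrj : adj xr j := sub_xr adj00 hj.
set D1 := (D :\: [set inr j]) :|: [set inl xr].
have cD1 : #|D1| <= #|D| by apply: card_exch; [rewrite sub1set | rewrite !cards1].
case: (boolP (vedb D1)) => [/vedP h1 | nh1].
  by left; exists D1; split; [exact: min_of Dmin h1 cD1 | rewrite !inE eqxx orbT].
have [c0 [w [hc0w nd]]] : exists c0 w, adj c0 w /\ forall z, z \in D1 ->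
    z \notin cnbhd adj (inl c0) :|: cnbhd adj (inr w).
  move: nh1; rewrite /vedb negb_forall => /existsP [u].
  rewrite negb_forall => /existsP [v]; rewrite negb_imply => /andP [huv].
  rewrite negb_exists => /forallP nd.
  have [x [y [hxy e]]] := edgeP huv; exists x, y; split => // z zD1.
  by have := nd z; rewrite zD1 /= e.
have nxrw : ~~ adj xr w.
  have hin : inl xr \in D1 by rewrite !inE eqxx orbT.
  have := nd _ hin; rewrite domL.
  by apply: contra => ->; rewrite orbT.
have zD1 : forall z, z \in D -> z != inr j -> z \in D1.
  by move=> z zD nz; rewrite !inE zD nz.
have hc0j : adj c0 j.
  have [z zD zd] := hD (inl c0) (inr w) hc0w.
  case: (z =P inr j) => [ez | /eqP nz].
    move: zd; rewrite ez domR => /orP [//|/eqP ejw].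
    by rewrite -ejw xrj in nxrw.
  by have := nd z (zD1 z zD nz); rewrite zd.
have [m hmj hm] : exists2 m, adj m j & forall x, adj x j -> rightX adj x <= rightX adj m.
  by case: (@arg_maxnP _ ord0 (fun x => adj x j) (rightX adj) hj) => m ? H; exists m.
have madj : forall y : 'I_n2.+1, j <= y -> y <= rightX adj m -> adj m y.
  have [y' hy' ey'] := rX_att m; move=> y h1 h2; apply: (cvx hmj hy').
  by rewrite h1 ey' h2.
have goodB : forall x y, adj xr y || adj m y ->
    exists2 w', w' \in [set inl xr; inl m] & w' \in cnbhd adj (inl x) :|: cnbhd adj (inr y).
  move=> x y /orP [] h; [exists (inl xr) | exists (inl m)];
    try by rewrite domL h orbT.
    by rewrite !inE eqxx.
  by rewrite !inE eqxx orbT.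
have covj : forall x y, adj x y -> adj x j || (j == y) -> adj xr y || adj m y.
  move=> x y hxy /orP [hxj | /eqP <-]; last by rewrite xrj.
  case: (boolP (adj xr y)) => //= nxy; apply: madj.
    exact: ltnW (xr_lt xrj nxy).
  exact: leq_trans (rX_ge hxy) (hm _ hxj).
case: (boolP [exists z in D, (z != inr j) && near z]).
  case/exists_inP => z zD /andP [nz hnear].
  left; exists ((D :\: [set inr j; z]) :|: [set inl xr; inl m]); split; last first.
    by rewrite !inE eqxx !orbT.
  apply: (min_of Dmin); last first.
    apply: card_exch.
      by apply/subsetP => u; rewrite !inE => /orP [/eqP->|/eqP->].
    by rewrite !cards2 (eq_sym (inr j)) nz; case: (_ != _).
  apply: exch hD _ => x y w' hxy /set2P [-> | ->] hd;
    apply: goodB.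
    by rewrite domR in hd; exact: covj hxy hd.
  have nzd := nd z (zD1 z zD nz).
  case: z zD nz hnear nzd hd => [c | k] zD nz /= hnear nzd hd.
    case/existsP: hnear => y'' /andP [hcy'' hxry''].
    rewrite domL negb_or in nzd; case/andP: nzd => _ ncw.
    have hcy : adj c y by rewrite domL in hd; case/orP: hd => [/eqP ->|].
    case: (boolP (adj xr y)) => //= nxy.
    have yw : y < w.
      rewrite ltnNge; apply/negP => wy; move/negP: ncw; apply.
      by apply: (cvx hcy'' hcy); rewrite wy ltnW // (xr_lt hxry'' nxrw).
    apply: madj; first exact: ltnW (xr_lt xrj nxy).
    exact: leq_trans (ltnW yw) (leq_trans (rX_ge hc0w) (hm _ hc0j)).
  rewrite domR negb_or in nzd; case/andP: nzd => nc0k nkw.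
  rewrite domR in hd; case/orP: hd => [hxk | /eqP <-]; last by rewrite hnear.
  case: (boolP (adj xr y)) => //= nxy.
  have kw := xr_lt hnear nxrw.
  have kj : k < j.
    rewrite ltnNge; apply/negP => jk; move/negP: nc0k; apply.
    by apply: (cvx hc0j hc0w); rewrite jk ltnW.
  have hxj : adj x j.
    by apply: (cvx hxk hxy); rewrite ltnW //= ltnW // (xr_lt xrj nxy).
  by have := covj x y hxy; rewrite hxj (negbTE nxy) /=; apply.
move=> hnear.
have hnear' : forall z, z \in D -> z != inr j -> ~~ near z.
  move=> z zD nz; apply/negP => hz; move/negP: hnear; apply.
  by apply/exists_inP; exists z => //; rewrite nz hz.
have hJ : [forall x in J1 adj, adj x j].
  apply/forall_inP => x; rewrite /J1 inE => /andP [nx0 /forallP hsub].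
  have [y hxy] := nbrX x.
  have [z zD zd] := hD (inl x) (inr y) hxy.
  case: (z =P inr j) => [ez | /eqP nz].
    by move: zd; rewrite ez domR => /orP [//|/eqP ->].
  exfalso; move/negP: (hnear' z zD nz); apply; case: z zD nz zd => [c | k] zD nz zd /=.
    rewrite domL in zd; apply/existsP; exists y; rewrite (implyP (hsub y) hxy) andbT.
    by case/orP: zd => [/eqP ->|].
  rewrite domR in zd; case/orP: zd => [hxk | /eqP ->].
    exact: (implyP (hsub k) hxk).
  exact: (implyP (hsub y) hxy).
have Pj : (j <= rightX adj ord0) && [forall x in J1 adj, adj x j].
  by rewrite (rX_ge hj) hJ.
case: (@arg_maxnP _ j (fun i => (i <= rightX adj ord0) && [forall x in J1 adj, adj x i])
          (fun i : 'I_n2.+1 => (i : nat)) Pj) => alpha /andP [ha hJa] hmax.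
have jal : j <= alpha := hmax j Pj.
right; exists alpha; split => //.
- by move=> i hi hJi; apply: hmax; rewrite hi hJi.
- have [y' hy' ey'] := rX_att ord0; apply: (cvx adj00 hy').
  by rewrite leq0n ey' ha.
exists ((D :\: [set inr j]) :|: [set inr alpha]); split; last by rewrite !inE eqxx orbT.
apply: (min_of Dmin); last by apply: card_exch; [rewrite sub1set | rewrite !cards1].
apply: exch hD _ => x y w' hxy; rewrite inE => /eqP -> ; rewrite domR => hd.
exists (inr alpha); first by rewrite inE.
rewrite domR; apply/orP; left.
have hxj : adj x j by case/orP: hd => // /eqP ->.
have [y' hy' ey'] := rX_att x.
case: (boolP (adj x ord0)) => hx0.
  apply: (cvx hx0 hy'); rewrite leq0n ey' /=; apply: leq_trans ha _.
  exact: left0_le adj00 hx0 (leq0n _).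
case: (leqP alpha (rightX adj x)) => hal.
  by apply: (cvx hxj hy'); rewrite jal ey' hal.
have : x \in J1 adj.
  rewrite inE hx0 /=; apply/forallP => y2; apply/implyP => hy2.
  rewrite adj_xr; apply: leq_trans (rX_ge hy2) _.
  apply: leq_trans (ltnW hal) (leq_trans ha _).
  exact: left0_le adj00 xr_adj0 (leq0n _).
by move/forall_inP: hJa; apply.
Qed.

End S.

Theorem lemma1 (n1 n2 : nat) (adj : 'I_n1.+1 -> 'I_n2.+1 -> bool) :
  connected_bip adj ->
  lex_convex adj ->
  let r' := rightX adj ord0 in        (* y_{r'} = right(x_1) *)
  let xr := xt1 adj in                (* x_r = right(y_1) *)
  let s := rightX adj xr in           (* y_s = right(x_r) *)
  s < n2 ->                           (* s < n_2 (0-based: y_s is not the last vertex) *)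
  (exists D, is_min_ved adj D /\ inl xr \in D)
  \/
  (exists alpha : 'I_n2.+1,
      [/\ alpha <= r',
          [forall x in J1 adj, adj x alpha],
          (forall i : 'I_n2.+1,
              i <= r' -> [forall x in J1 adj, adj x i] -> i <= alpha),
          adj ord0 alpha
        & exists D, is_min_ved adj D /\ inr alpha \in D]).
Proof.
move=> c l r' xr s hs.
exact: (main c l hs).
Qed.
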